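(* Assume $T_k$ is nonsingular and let $X_k=V_kT_k^{-1}V_k^*$. Then the Riccati residual $$R_k=C^*C+A^*X_k+X_kA-X_kFX_k$$ satisfies $$R_k=[C^*,V_k]\begin{bmatrix}1\\-T_k^{-1}\mathbf 1\end{bmatrix}\begin{bmatrix}1&-\mathbf 1^*T_k^{-1}\end{bmatrix}[C^*,V_k]^*.$$ In particular, $R_k$ has rank at most one.
   Context: Let $A\in\mathbb C^{n\times n}$, let $C\in\mathbb C^{1\times n}$, and let $F\in\mathbb C^{n\times n}$ be Hermitian; $M^*$ denotes the conjugate transpose. Let $\alpha_1,\dots,\alpha_k\in\mathbb C$ be pairwise distinct with $\operatorname{Re}(\alpha_j)>0$ and $-A^*+\alpha_jI$ nonsingular. Set $$V_k=\big[(-A^*+\alpha_1I)^{-1}C^*,\dots,(-A^*+\alpha_kI)^{-1}C^*\big]\in\mathbb C^{n\times k},$$ $\Lambda_k=\operatorname{diag}(\alpha_1,\dots,\alpha_k)$, $\mathbf 1=[1,\dots,1]^T\in\mathbb R^k$, and let $T_k\in\mathbb C^{k\times k}$ be the matrix with entries $T_k(i,j)=\dfrac{1+(V_k^*FV_k)_{ij}}{\bar\alpha_i+\alpha_j}$, i.e. the unique solution of $\Lambda_k^*T+T\Lambda_k=V_k^*FV_k+\mathbf 1\mathbf 1^*$. *)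

(* Defs.v *)
From HB Require Import structures.
From mathcomp Require Import all_boot all_order all_algebra.
Set Implicit Arguments. Unset Strict Implicit. Unset Printing Implicit Defensive.
Import Order.TTheory GRing.Theory Num.Theory.
Local Open Scope ring_scope.

Definition ctmx (C : numClosedFieldType) (m n : nat) (M : 'M[C]_(m, n)) : 'M[C]_(n, m) :=
  (map_mx Num.conj M)^T.

Definition Vmat (C : numClosedFieldType) (n k : nat) (A : 'M[C]_n) (Cm : 'M[C]_(1, n))
  (alpha : 'I_k -> C) : 'M[C]_(n, k) :=
  \matrix_(i < n, j < k)
     ((invmx (- ctmx A + (alpha j)%:M) *m ctmx Cm) i 0).

Definition Tmat (C : numClosedFieldType) (n k : nat) (V : 'M[C]_(n, k)) (F : 'M[C]_n)
  (alpha : 'I_k -> C) : 'M[C]_k :=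
  \matrix_(i < k, j < k)
     ((1 + (ctmx V *m F *m V) i j) / (Num.conj (alpha i) + alpha j)).

(* Main.v *)
Require Import Defs.
From HB Require Import structures.
From mathcomp Require Import all_boot all_order all_algebra.
Import Order.TTheory GRing.Theory Num.Theory.
Local Open Scope ring_scope.

Section Aux.
Variable C : numClosedFieldType.

Lemma ctmxK m n (M : 'M[C]_(m, n)) : ctmx (ctmx M) = M.
Proof. by apply/matrixP => i j; rewrite /ctmx !mxE conjCK. Qed.

Lemma ctmxM m n p (M : 'M[C]_(m, n)) (N : 'M[C]_(n, p)) :
  ctmx (M *m N) = ctmx N *m ctmx M.
Proof.
apply/matrixP => i j; rewrite /ctmx !mxE rmorph_sum; apply: eq_bigr => l _.
by rewrite !mxE rmorphM mulrC.
Qed.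

Lemma ctmxB m n (M N : 'M[C]_(m, n)) : ctmx (M - N) = ctmx M - ctmx N.
Proof. by apply/matrixP => i j; rewrite /ctmx !mxE rmorphB. Qed.

Lemma abstr (V : zmodType) (a b e f g h : V) :
  a + (b - e) + (f - g) - (f + b - h) = a - e - g + h.
Proof.
rewrite !opprD !opprK !addrA.
rewrite (addrAC _ f (-g)) -(addrA _ f (-f)) subrr addr0.
rewrite (addrAC a b (-e)) (addrAC _ b (-g)) -(addrA _ b (-b)) subrr addr0.
done.
Qed.

Lemma abstr2 (V : zmodType) (a e g h : V) :
  a - e - g + h = a - g - (e - h).
Proof. by rewrite opprB (addrAC a) addrA [RHS]addrAC. Qed.

Lemma ReD (a b : C) : 'Re (a + b) = 'Re a + 'Re b.
Proof. by rewrite raddfD. Qed.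

Lemma Re0 : 'Re (0 : C) = 0.
Proof. by rewrite raddf0. Qed.

End Aux.

Theorem proposition6p3 (C : numClosedFieldType) (n k : nat)
  (A : 'M[C]_n) (Cm : 'M[C]_(1, n)) (F : 'M[C]_n) (alpha : 'I_k -> C) :
  ctmx F = F ->
  injective alpha ->
  (forall j, 0 < 'Re (alpha j)) ->
  (forall j, (- ctmx A + (alpha j)%:M) \in unitmx) ->
  let V := Vmat A Cm alpha in
  let T := Tmat V F alpha in
  T \in unitmx ->
  let X := V *m invmx T *m ctmx V in
  let R := ctmx Cm *m Cm + ctmx A *m X + X *m A - X *m F *m X in
  let W : 'M[C]_(n, 1 + k) := row_mx (ctmx Cm) V in
  let one : 'cV[C]_k := const_mx 1 in
  let u : 'cV[C]_(1 + k) := col_mx 1 (- (invmx T *m one)) in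
  let v : 'rV[C]_(1 + k) := row_mx 1 (- (ctmx one *m invmx T)) in
  R = W *m (u *m v) *m ctmx W /\ (\rank R <= 1)%N.
Proof.
move=> HF _ Hre Hu V T HT X R W one u v.
set c := ctmx Cm.
set L : 'M[C]_k := diag_mx (\row_j alpha j).
set Lc : 'M[C]_k := diag_mx (\row_j Num.conj (alpha j)).
have HV : ctmx A *m V = V *m L - c *m ctmx one.
  apply/matrixP => i j.
  set w := invmx (- ctmx A + (alpha j)%:M) *m c.
  have Hw : (- ctmx A + (alpha j)%:M) *m w = c by rewrite mulKVmx.
  have Hw2 : ctmx A *m w = alpha j *: w - c.
    by rewrite -Hw mulmxDl mul_scalar_mx mulNmx opprD opprK addrCA subrr addr0.
  have E1 : (ctmx A *m V) i j = (ctmx A *m w) i 0.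
    by rewrite !mxE; apply: eq_bigr => l _; rewrite !mxE.
  rewrite E1 Hw2 mul_mx_diag !mxE big_ord1 !mxE.
  by rewrite /w mulrC rmorph1 mulr1.
have HVc : ctmx V *m A = Lc *m ctmx V - one *m ctmx c.
  have := congr1 (@ctmx C _ _) HV.
  rewrite ctmxM ctmxK ctmxB !ctmxM ctmxK; move=> ->; congr (_ *m _ - _).
  apply/matrixP => i j; rewrite /ctmx !mxE rmorphMn eq_sym; by case: eqP => [->|].
set G := ctmx V *m F *m V.
have TE : forall i j, T i j = (1 + G i j) / (Num.conj (alpha i) + alpha j).
  by move=> i j; rewrite /T /Tmat mxE.
have GE : ctmx V *m F *m V = G by [].
clearbody G T.
have HTe : G = Lc *m T + T *m L - one *m ctmx one.
  apply/matrixP => i j.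
  rewrite mul_mx_diag mul_diag_mx !mxE big_ord1 !mxE rmorph1 mulr1 TE.
  have d0 : Num.conj (alpha i) + alpha j != 0.
    apply/eqP => h; have := congr1 (@Re C) h.
    rewrite ReD Re_conj Re0 => h2.
    have := Hre i; have := Hre j.
    by move=> a b; move: (addr_gt0 b a); rewrite h2 ltxx.
  by rewrite [_^* * _]mulrC -mulrDr divfK // [1 + _]addrC addrK.
set S := invmx T.
have HS1 : S *m T = 1%:M by rewrite mulVmx.
have HS2 : T *m S = 1%:M by rewrite mulmxV.
have K1 m (M : 'M[C]_(m, k)) : M *m S *m T = M by rewrite -mulmxA HS1 mulmx1.
have K2 m (M : 'M[C]_(m, k)) : M *m T *m S = M by rewrite -mulmxA HS2 mulmx1.
have cK : ctmx c = Cm by rewrite ctmxK.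
rewrite cK in HVc.
have t2 : ctmx A *m X = V *m L *m S *m ctmx V - c *m ctmx one *m S *m ctmx V.
  by rewrite /X !mulmxA HV !(mulmxDl, mulmxBl, mulNmx, mulmxA).
have t3 : X *m A = V *m S *m Lc *m ctmx V - V *m S *m one *m Cm.
  by rewrite /X -mulmxA HVc !(mulmxDr, mulmxBr, mulmxN, mulmxA).
have t4 : X *m F *m X = V *m S *m Lc *m ctmx V + V *m L *m S *m ctmx V
                        - V *m S *m one *m ctmx one *m S *m ctmx V.
  have -> : X *m F *m X = V *m S *m G *m S *m ctmx V by rewrite /X -GE !mulmxA.
  rewrite HTe !(mulmxDr, mulmxBr, mulmxN, mulmxDl, mulmxBl, mulNmx, mulmxA).
  by rewrite K1 K2.
have key : R = (c - V *m S *m one) *m (Cm - ctmx one *m S *m ctmx V).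
  rewrite /R t2 t3 t4 abstr.
  rewrite !(mulmxDr, mulmxBr, mulmxN, mulmxDl, mulmxBl, mulNmx, mulmxA).
  exact: abstr2.
have Wu : W *m u = c - V *m S *m one.
  by rewrite /W /u mul_row_col mulmx1 mulmxN mulmxA.
have vW : v *m ctmx W = Cm - ctmx one *m S *m ctmx V.
  have -> : ctmx W = col_mx Cm (ctmx V).
    by rewrite /W -[X in col_mx X _]cK /ctmx map_row_mx tr_row_mx.
  by rewrite /v mul_row_col mul1mx mulNmx.
have E : W *m (u *m v) *m ctmx W = (W *m u) *m (v *m ctmx W).
  by rewrite !mulmxA.
split; first by rewrite E Wu vW key.
rewrite key; apply: leq_trans (mxrankM_maxl _ _) _.
exact: rank_leq_col.
Qed.
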